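(* A set $U\subseteq\mathcal{B}$ is avoidable if and only if $U^{*}=\{s^{*}\mid s\in U\}$ is avoidable. Furthermore, $U$ is maximal avoidable if and only if $U^{*}$ is maximal avoidable.
   Context: The bicyclic inverse semigroup is $\mathcal{B}=\{(a,b)\in\mathbb{Z}\times\mathbb{Z}\mid a\ge 0,\ a+b\ge 0\}$ with multiplication $(a,b)(c,d)=(\max\{c+d,a\}-d,\ b+d)$ and inverse $(a,b)^{*}=(a+b,-b)$. A subset $U\subseteq\mathcal{B}$ is called avoidable if $\mathcal{B}$ can be partitioned into two subsets $A$ and $B$ such that no element of $U$ can be written as a product $xy$ of two distinct elements $x\neq y$ both in $A$, or both in $B$. A maximal avoidable set is an avoidable set not properly contained in any other avoidable subset of $\mathcal{B}$. *)

(* Defs.v *)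
From Stdlib Require Import ZArith.
Open Scope Z_scope.

(* The bicyclic inverse semigroup B, as pairs (a,b) of integers with
   a >= 0 and a + b >= 0. *)
Definition inB (p : Z * Z) : Prop := 0 <= fst p /\ 0 <= fst p + snd p.

Definition bmul (p q : Z * Z) : Z * Z :=
  let '(a, b) := p in let '(c, d) := q in (Z.max (c + d) a - d, b + d).

Definition binv (p : Z * Z) : Z * Z := let '(a, b) := p in (a + b, - b).

Definition subB (U : Z * Z -> Prop) : Prop := forall s, U s -> inB s.

Definition star_set (U : Z * Z -> Prop) : Z * Z -> Prop :=
  fun t => exists s, U s /\ t = binv s.

(* U is avoidable: B can be partitioned into A = {x | inA x} and its
   complement B \ A such that no product xy with x <> y both in the same
   part lies in U. *)
Definition avoidable (U : Z * Z -> Prop) : Prop :=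
  subB U /\
  exists inA : Z * Z -> Prop,
    forall x y, inB x -> inB y -> x <> y -> (inA x <-> inA y) ->
      ~ U (bmul x y).

Definition maximal_avoidable (U : Z * Z -> Prop) : Prop :=
  avoidable U /\
  forall V, avoidable V -> (forall s, U s -> V s) -> forall s, V s -> U s.

(* Main.v *)
Require Import Defs.
From Stdlib Require Import ZArith Lia.
Open Scope Z_scope.

Lemma binv_inv p : binv (binv p) = p.
Proof. destruct p as [a b]; simpl; f_equal; lia. Qed.

Lemma binv_inB p : inB p -> inB (binv p).
Proof. destruct p as [a b]; unfold inB; simpl; lia. Qed.

Lemma binv_mul x y : binv (bmul x y) = bmul (binv y) (binv x).
Proof.
  destruct x as [a b], y as [c d]; simpl; f_equal; try lia.
Qed.

Lemma binv_inj x y : binv x = binv y -> x = y.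
Proof. intro H. rewrite <- (binv_inv x), <- (binv_inv y), H. reflexivity. Qed.

Lemma star_star U s : star_set (star_set U) s <-> U s.
Proof.
  unfold star_set; split.
  - intros [t [[u [Hu ->]] ->]]. rewrite binv_inv. exact Hu.
  - intro H. exists (binv s). split. exists s; auto. now rewrite binv_inv.
Qed.

Lemma avoid_ext U V : (forall s, U s <-> V s) -> avoidable U -> avoidable V.
Proof.
  intros E [HS [A HA]]. split.
  - intros s Hs. apply HS, E, Hs.
  - exists A. intros x y Hx Hy Hxy Hiff HV. apply (HA x y Hx Hy Hxy Hiff), E, HV.
Qed.

Lemma avoid_star U : avoidable U -> avoidable (star_set U).
Proof.
  intros [HS [A HA]]. split.
  - intros t [s [Hs ->]]. apply binv_inB, HS, Hs.
  - exists (fun x => A (binv x)). intros x y Hx Hy Hxy Hiff [s [Hs Heq]].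
    apply (HA (binv y) (binv x)); try apply binv_inB; auto.
    + intro E. apply Hxy. symmetry. now apply binv_inj.
    + tauto.
    + rewrite <- binv_mul, Heq, binv_inv. exact Hs.
Qed.

Lemma avoid_star_rev U : avoidable (star_set U) -> avoidable U.
Proof.
  intro H. apply avoid_star in H. eapply avoid_ext; [|exact H].
  intro s; apply star_star.
Qed.

Lemma max_star U : maximal_avoidable U -> maximal_avoidable (star_set U).
Proof.
  intros [HA HM]. split. now apply avoid_star.
  intros V HV Hsub s Vs.
  assert (HV' := avoid_star _ HV).
  assert (E : forall t, U t -> star_set V t).
  { intros t Ht. apply star_star in Ht. destruct Ht as [u [Hu ->]].
    exists u. split; auto. }
  exists (binv s). split; [|now rewrite binv_inv].
  apply (HM _ HV' E). exists s. split; auto.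
Qed.

Lemma max_ext U V : (forall s, U s <-> V s) -> maximal_avoidable U -> maximal_avoidable V.
Proof.
  intros E [HA HM]. split. eapply avoid_ext; eauto.
  intros W HW Hs s Ws. apply E. apply (HM W HW); auto.
  intros t Ht. apply Hs, E, Ht.
Qed.

Theorem proposition4p1 :
  forall U : Z * Z -> Prop, subB U ->
    (avoidable U <-> avoidable (star_set U)) /\
    (maximal_avoidable U <-> maximal_avoidable (star_set U)).
Proof.
  intros U _. split; split.
  - apply avoid_star.
  - apply avoid_star_rev.
  - apply max_star.
  - intro H. apply max_star in H. eapply max_ext; [|exact H]. intro; apply star_star.
Qed.
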